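(* Let $T$, $\mathcal{S}=\mathcal{S}_+\cup\mathcal{S}_-$, $\Psi$, $U$, $\lambda$ and $P_\lambda$ be as in the context. Consider the following three discrete-time QBDs on phase space $\mathcal{S}$: (i) the QBD with blocks $\Delta_{-1}=\frac12\begin{bmatrix}0&0\\0&I\end{bmatrix}$, $\Delta_0=\begin{bmatrix}0&P_{\lambda+-}\\0&\frac12P_{\lambda--}\end{bmatrix}$, $\Delta_1=\begin{bmatrix}P_{\lambda++}&0\\\frac12P_{\lambda-+}&0\end{bmatrix}$; (ii) the QBD with blocks $A'_{-1}=\frac12\begin{bmatrix}0&0\\0&I\end{bmatrix}$, $A'_0=\frac12\begin{bmatrix}I&P_{\lambda+-}\\0&P_{\lambda--}\end{bmatrix}$, $A'_1=\frac12\begin{bmatrix}P_{\lambda++}&0\\P_{\lambda-+}&0\end{bmatrix}$; (iii) the QBD with blocks $A_{-1}=\begin{bmatrix}0&0\\0&(I-\lambda^{-1}U)^{-1}\end{bmatrix}$, $A_0=\begin{bmatrix}0&P_{\lambda+-}\\0&0\end{bmatrix}$, $A_1=\begin{bmatrix}P_{\lambda++}&0\\0&0\end{bmatrix}$. Then the QBD in (ii) has the same $\mathcal{G}$-matrix as the QBD in (i) and the same $\mathcal{G}$-matrix as the QBD in (iii).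
   Context: $T$ is the generator of a continuous-time Markov chain on a finite set $\mathcal{S}=\mathcal{S}_+\cup\mathcal{S}_-$ (disjoint, both nonempty), partitioned into blocks $T_{++},T_{+-},T_{-+},T_{--}$ according to $\mathcal{S}_\pm$. $\Psi$ is the minimal nonnegative solution of $T_{+-}+\Psi T_{--}+T_{++}\Psi+\Psi T_{-+}\Psi=0$ (the first-return probability matrix of the unit-rate fluid queue with phase generator $T$, rates $+1$ on $\mathcal{S}_+$ and $-1$ on $\mathcal{S}_-$), and $U:=T_{--}+T_{-+}\Psi$. $\lambda>0$ satisfies $\lambda\ge\max_i|T_{ii}|$ and $P_\lambda:=I+\lambda^{-1}T$ with blocks $P_{\lambda++}$ etc. A discrete-time quasi-birth-death process (QBD) with transition blocks $L_{-1},L_0,L_1$ is a Markov chain $\{(Y_n,\kappa_n)\}$ on $\mathbb{Z}\times\mathcal{S}$ with $\mathbb{P}[Y_n=k+d,\kappa_n=j\mid Y_{n-1}=k,\kappa_{n-1}=i]=(L_d)_{ij}$ for $d\in\{-1,0,1\}$. Its $\mathcal{G}$-matrix has entries $\mathcal{G}_{ij}=\mathbb{P}[\theta<\infty,\kappa_\theta=j\mid Y_0=k,\kappa_0=i]$ with $\theta=\inf\{n>0:Y_n=k-1\}$. Matrices are partitioned into blocks according to $\mathcal{S}_+,\mathcal{S}_-$. *)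

(* Defs.v *)
From HB Require Import structures.
From mathcomp Require Import all_boot all_order all_algebra.
From mathcomp Require Import all_classical all_reals all_analysis.
Set Implicit Arguments. Unset Strict Implicit. Unset Printing Implicit Defensive.
Import Order.TTheory GRing.Theory Num.Theory numFieldNormedType.Exports.
Local Open Scope ring_scope.

(* Phase space S = S_+ (first p indices) u S_- (last q indices) = 'I_(p+q). *)

Definition is_generator (R : realType) (n : nat) (T : 'M[R]_n) : Prop :=
  (forall i j, i != j -> 0 <= T i j) /\ (forall i, \sum_j T i j = 0).

Definition mx_nonneg (R : realType) (m n : nat) (X : 'M[R]_(m, n)) : Prop :=
  forall i j, 0 <= X i j.

Definition riccati (R : realType) (p q : nat) (T : 'M[R]_(p + q))
  (X : 'M[R]_(p, q)) : Prop :=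
  ursubmx T + X *m drsubmx T + ulsubmx T *m X + X *m dlsubmx T *m X = 0.

Definition is_min_nonneg_riccati_sol (R : realType) (p q : nat)
  (T : 'M[R]_(p + q)) (Psi : 'M[R]_(p, q)) : Prop :=
  [/\ mx_nonneg Psi, riccati T Psi &
      forall X : 'M[R]_(p, q), mx_nonneg X -> riccati T X ->
        forall i j, Psi i j <= X i j].

(* Taboo probabilities of a discrete-time QBD with blocks Lm1, L0, L1
   (levels changing by -1, 0, +1), started at level k in some phase:
   (qbd_taboo n h) i j = P[Y_n = k-1+h, kappa_n = j, Y_m >= k for 1 <= m <= n
                           | Y_0 = k, kappa_0 = i]   for h >= 1;
   height 0 (level k-1) is taboo, so qbd_taboo n 0 = 0. *)
Fixpoint qbd_taboo (R : realType) (m : nat) (Lm1 L0 L1 : 'M[R]_m)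
  (n h : nat) : 'M[R]_m :=
  match h with
  | 0%N => 0
  | h'.+1 =>
    match n with
    | 0%N => if h' == 0%N then 1%:M else 0
    | n'.+1 =>
        qbd_taboo Lm1 L0 L1 n' h.+1 *m Lm1 + qbd_taboo Lm1 L0 L1 n' h *m L0
        + qbd_taboo Lm1 L0 L1 n' h' *m L1
    end
  end.

(* G-matrix: G i j = P[theta < oo, kappa_theta = j | Y_0 = k, kappa_0 = i],
   theta = inf{n > 0 : Y_n = k-1}; the event {theta = n+1, kappa_theta = j}
   has probability (qbd_taboo n 1 *m Lm1) i j. *)
Definition qbd_G (R : realType) (m : nat) (Lm1 L0 L1 : 'M[R]_m) : 'M[R]_m :=
  \matrix_(i, j) (limn (series (fun n : nat => ((qbd_taboo Lm1 L0 L1 n 1 *m Lm1) i j : R)))).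

(* Main.v *)
Require Import Defs.
From HB Require Import structures.
From mathcomp Require Import all_boot all_order all_algebra.
From mathcomp Require Import all_classical all_reals all_analysis.
From mathcomp Require Import zify lra.
Set Implicit Arguments. Unset Strict Implicit. Unset Printing Implicit Defensive.
Import Order.TTheory GRing.Theory Num.Theory.
Import numFieldNormedType.Exports.
Local Open Scope classical_set_scope.
Local Open Scope ring_scope.

Section Comb.
Variables (R : realType) (m : nat) (Lm1 L0 L1 : 'M[R]_m).
Local Notation F := (qbd_taboo Lm1 L0 L1).
Definition gq n := F n 1 *m Lm1.
Definition Sq n h := \sum_(i < n) gq i *m F (n.-1 - i) h.
Definition cq n := \sum_(i < n) gq i *m gq (n.-1 - i).

Lemma F0 n : F n 0 = 0. Proof. by case: n. Qed.
Lemma FS n h : F n.+1 h.+1 = F n h.+2 *m Lm1 + F n h.+1 *m L0 + F n h *m L1.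
Proof. by []. Qed.
Lemma Sq0 n : Sq n 0 = 0.
Proof. by rewrite /Sq big1 // => i _; rewrite F0 mulmx0. Qed.

Lemma Sq_rec n h : Sq n.+1 h.+1 = (if h == 0%N then gq n else 0)
   + Sq n h.+2 *m Lm1 + Sq n h.+1 *m L0 + Sq n h *m L1.
Proof.
rewrite /Sq big_ord_recr /= subnn.
have -> : F 0 h.+1 = if h == 0%N then 1%:M else 0 by [].
rewrite [gq n *m _](_ : _ = if h == 0%N then gq n else 0); last first.
  by case: (h == 0%N); rewrite ?mulmx1 ?mulmx0.
have -> : \sum_(i < n) gq i *m F (n - i) h.+1 =
   Sq n h.+2 *m Lm1 + Sq n h.+1 *m L0 + Sq n h *m L1.
  rewrite /Sq !mulmx_suml -!big_split /=; apply: eq_bigr => i _.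
  have -> : (n - i = (n.-1 - i).+1)%N.
    by have := ltn_ord i; case: n i => //= n' i Hi; rewrite subSn.
  by rewrite FS !mulmxDr !mulmxA.
by rewrite addrC !addrA.
Qed.

Lemma AC6 (V : zmodType) (a b c d e f : V) :
  a + b + c + (d + e + f) = (a + d) + (b + e) + (c + f).
Proof. by rewrite addrACA [X in X + _]addrACA. Qed.

Lemma V_rec n h : F n.+1 h + Sq n.+1 h.+1 = (F n h.+1 + Sq n h.+2) *m Lm1
   + (F n h + Sq n h.+1) *m L0 + (F n h.-1 + Sq n h) *m L1.
Proof.
rewrite Sq_rec; case: h => [|h] /=.
  rewrite F0 Sq0 !add0r mul0mx addr0 !mulmxDl /gq.
  by rewrite addr0.
by rewrite add0r !mulmxDl AC6.
Qed.

Lemma alg3 (A B X Y Z P Q W : 'M[R]_m) :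
  (A *m X + B *m P) *m Lm1 + (A *m Y + B *m Q) *m L0 + (A *m Z + B *m W) *m L1
  = A *m (X *m Lm1 + Y *m L0 + Z *m L1) + B *m (P *m Lm1 + Q *m L0 + W *m L1).
Proof. by rewrite !mulmxDl !mulmxDr !mulmxA AC6. Qed.

Lemma main_dec n h : F n.+1 h = L0 *m F n h + L1 *m (F n h.-1 + Sq n h).
Proof.
elim: n h => [|n IH] h.
  case: h => [|h]; first by rewrite !F0 Sq0 addr0 !mulmx0 addr0.
  rewrite FS /Sq big_ord0 addr0 /= mul0mx add0r.
  case: h => [|[|h]] /=; rewrite ?mul1mx ?mulmx1 ?mul0mx ?mulmx0 ?add0r ?addr0 //.
case: h => [|h]; first by rewrite !F0 Sq0 addr0 !mulmx0 addr0.
rewrite [F n.+1 h.+1 in RHS]FS V_rec FS !IH /=.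
exact: alg3.
Qed.
Lemma gq0 : gq 0 = Lm1.
Proof. by rewrite /gq /= mul1mx. Qed.

Lemma g_rec n : gq n.+1 = L0 *m gq n + L1 *m cq n.
Proof.
rewrite /gq main_dec /= F0 add0r mulmxDl -!mulmxA; congr (_ + _ *m _).
by rewrite /Sq /cq mulmx_suml; apply: eq_bigr => i _; rewrite -mulmxA.
Qed.
End Comb.

Lemma sub3 (V : zmodType) (a b c b' c' : V) :
  a + b + c - (a + b' + c') = (b - b') + (c - c').
Proof. by rewrite -[a + b + c]addrA -[a + b' + c']addrA [a + (b + c)]addrC addrKA opprD addrACA. Qed.
Lemma subX (V : zmodType) (a b c d : V) : (a - c) - (a - b) = (b - d) + (d - c).
Proof. by rewrite [a - c]addrC addrKA opprK addrA subrK addrC. Qed.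

Section Analysis.
Variable R : realType.

Lemma cvg_big (I : Type) (r : seq I) (f : I -> nat -> R) (l : I -> R) :
  (forall i, f i @ \oo --> l i) ->
  (fun N => \sum_(i <- r) f i N) @ \oo --> \sum_(i <- r) l i.
Proof.
move=> H; elim: r => [|x r IH].
  under eq_fun do rewrite big_nil.
  rewrite big_nil; exact: cvg_cst.
under eq_fun do rewrite big_cons.
rewrite big_cons; exact: cvgD.
Qed.

Definition mle (a b : nat) (A B : 'M[R]_(a,b)) := forall i j, A i j <= B i j.
Definition mcvg (a b : nat) (A_ : nat -> 'M[R]_(a,b)) (A : 'M[R]_(a,b)) :=
  forall i j, (fun N => A_ N i j) @ \oo --> A i j.

Lemma mcvg_mul a b c (A_ : nat -> 'M[R]_(a,b)) (B_ : nat -> 'M[R]_(b,c)) A B :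
  mcvg A_ A -> mcvg B_ B -> mcvg (fun N => A_ N *m B_ N) (A *m B).
Proof.
move=> HA HB i j; under eq_fun do rewrite mxE.
rewrite mxE; apply: cvg_big => k; exact: cvgM.
Qed.

Lemma mcvg_add a b (A_ B_ : nat -> 'M[R]_(a,b)) A B :
  mcvg A_ A -> mcvg B_ B -> mcvg (fun N => A_ N + B_ N) (A + B).
Proof.
move=> HA HB i j; under eq_fun do rewrite mxE.
rewrite mxE; exact: cvgD.
Qed.

Lemma mcvg_sub a b (A_ B_ : nat -> 'M[R]_(a,b)) A B :
  mcvg A_ A -> mcvg B_ B -> mcvg (fun N => A_ N - B_ N) (A - B).
Proof.
move=> HA HB i j; under eq_fun do rewrite !mxE.
rewrite !mxE; exact: (cvgB (HA i j) (HB i j)).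
Qed.

Lemma mcvg_cst a b (A : 'M[R]_(a,b)) : mcvg (fun _ => A) A.
Proof. move=> i j; exact: cvg_cst. Qed.

Lemma mcvg_le a b (A_ : nat -> 'M[R]_(a,b)) A B :
  mcvg A_ A -> (forall N, mle (A_ N) B) -> mle A B.
Proof.
move=> HA HB i j; apply: (cvgr_to_le (HA i j)).
by apply: nearW => N; apply: HB.
Qed.

Lemma mcvg_ge a b (A_ : nat -> 'M[R]_(a,b)) A B :
  mcvg A_ A -> (forall N, mle B (A_ N)) -> mle B A.
Proof.
move=> HA HB i j; apply: (cvgr_to_ge (HA i j)).
by apply: nearW => N; apply: HB.
Qed.



Lemma mle_refl a b (A : 'M[R]_(a,b)) : mle A A.
Proof. by move=> i j. Qed.

Lemma mle_trans a b (A B C : 'M[R]_(a,b)) : mle A B -> mle B C -> mle A C.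
Proof. by move=> H1 H2 i j; apply: le_trans (H1 i j) (H2 i j). Qed.

Lemma mle_anti a b (A B : 'M[R]_(a,b)) : mle A B -> mle B A -> A = B.
Proof. by move=> H1 H2; apply/matrixP => i j; apply/le_anti; rewrite H1 H2. Qed.

Lemma mleD a b (A A' B B' : 'M[R]_(a,b)) : mle A A' -> mle B B' -> mle (A + B) (A' + B').
Proof. by move=> H1 H2 i j; rewrite !mxE lerD. Qed.

Lemma mle_sum a b (I : finType) (P : pred I) (f g : I -> 'M[R]_(a,b)) :
  (forall i, mle (f i) (g i)) -> mle (\sum_(i | P i) f i) (\sum_(i | P i) g i).
Proof. by move=> H i j; rewrite !summxE; apply: ler_sum => k _; apply: H. Qed.

Lemma mle_mull a b c (A : 'M[R]_(a,b)) (B B' : 'M[R]_(b,c)) :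
  mle 0 A -> mle B B' -> mle (A *m B) (A *m B').
Proof.
move=> HA HB i j; rewrite !mxE; apply: ler_sum => k _.
by apply: ler_wpM2l; [have := HA i k; rewrite mxE | apply: HB].
Qed.

Lemma mle_mulr a b c (A A' : 'M[R]_(a,b)) (B : 'M[R]_(b,c)) :
  mle 0 B -> mle A A' -> mle (A *m B) (A' *m B).
Proof.
move=> HB HA i j; rewrite !mxE; apply: ler_sum => k _.
by apply: ler_wpM2r; [have := HB k j; rewrite mxE | apply: HA].
Qed.

Lemma mle0_mul a b c (A : 'M[R]_(a,b)) (B : 'M[R]_(b,c)) :
  mle 0 A -> mle 0 B -> mle 0 (A *m B).
Proof. by move=> HA HB; have := mle_mull HA HB; rewrite mulmx0. Qed.

Lemma mle0_add a b (A B : 'M[R]_(a,b)) : mle 0 A -> mle 0 B -> mle 0 (A + B).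
Proof. by move=> HA HB; have := mleD HA HB; rewrite addr0. Qed.

Lemma mle0_sum a b (I : finType) (P : pred I) (f : I -> 'M[R]_(a,b)) :
  (forall i, mle 0 (f i)) -> mle 0 (\sum_(i | P i) f i).
Proof. by move=> H; have := mle_sum P H; rewrite big1. Qed.

Lemma mle_addr a b (A B : 'M[R]_(a,b)) : mle 0 B -> mle A (A + B).
Proof. by move=> H; have := mleD (mle_refl A) H; rewrite addr0. Qed.

End Analysis.
Arguments mcvg_cst {R a b} A.


Section QBD.
Variables (R : realType) (m : nat) (Lm1 L0 L1 : 'M[R]_m).
Local Notation ones := (const_mx 1 : 'cV[R]_m).
Hypotheses (hm1 : mle 0 Lm1) (h0 : mle 0 L0) (h1 : mle 0 L1)
  (hsub : mle ((Lm1 + L0 + L1) *m ones) ones).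
Local Notation F := (qbd_taboo Lm1 L0 L1).
Local Notation g := (gq Lm1 L0 L1).
Local Notation c := (cq Lm1 L0 L1).

Lemma mle0_1 n : mle 0 (1%:M : 'M[R]_n).
Proof. by move=> i j; rewrite !mxE ler0n. Qed.

Lemma mle00 a b : mle 0 (0 : 'M[R]_(a,b)).
Proof. exact: mle_refl. Qed.

Lemma F_ge0 n h : mle 0 (F n h).
Proof.
elim: n h => [|n IH] [|h]; rewrite ?F0 ?FS; try exact: mle00.
  by rewrite /=; case: (h == 0%N); [exact: mle0_1 | exact: mle00].
by apply: mle0_add; [apply: mle0_add|]; apply: mle0_mul.
Qed.

Lemma g_ge0 n : mle 0 (g n).
Proof. exact: mle0_mul (F_ge0 _ _) hm1. Qed.

Lemma c_ge0 n : mle 0 (c n).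
Proof. by apply: mle0_sum => i; apply: mle0_mul; apply: g_ge0. Qed.

Definition GN N := \sum_(n < N) g n.
Definition CN N := \sum_(n < N) c n.
Definition Rq (Y : 'M[R]_m) := Lm1 + L0 *m Y + L1 *m (Y *m Y).

Lemma GN0 : GN 0 = 0. Proof. by rewrite /GN big_ord0. Qed.

Lemma GN_S N : GN N.+1 = Lm1 + L0 *m GN N + L1 *m CN N.
Proof.
rewrite /GN big_ord_recl gq0 -addrA; congr (_ + _).
under eq_bigr do rewrite lift0 g_rec.
by rewrite big_split /= -!mulmx_sumr.
Qed.

Lemma GN_recr N : GN N.+1 = GN N + g N.
Proof. by rewrite /GN big_ord_recr. Qed.

Lemma GN_ge0 N : mle 0 (GN N).
Proof. by apply: mle0_sum => i; apply: g_ge0. Qed.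

Lemma CN_ge0 N : mle 0 (CN N).
Proof. by apply: mle0_sum => i; apply: c_ge0. Qed.

Lemma GN_mono i j : (i <= j)%N -> mle (GN i) (GN j).
Proof.
move=> /subnKC <-; elim: (j - i)%N => [|k IH]; first by rewrite addn0; exact: mle_refl.
by rewrite addnS GN_recr; apply: mle_trans IH (mle_addr _ (g_ge0 _)).
Qed.

Lemma CN_eq N : CN N = \sum_(a < N) g a *m GN (N.-1 - a).
Proof.
elim: N => [|N IH]; first by rewrite /CN !big_ord0.
rewrite /CN big_ord_recr /= -/(CN N) IH [in RHS]big_ord_recr /= subnn GN0 mulmx0 addr0.
rewrite /cq -big_split /=; apply: eq_bigr => a _.
rewrite -mulmxDr; congr (_ *m _).
have -> : (N - a = (N.-1 - a).+1)%N.
  by have := ltn_ord a; case: N a {IH} => //= N' a Ha; rewrite subSn.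
by rewrite GN_recr.
Qed.

Lemma CN_le N : mle (CN N) (GN N *m GN N).
Proof.
rewrite CN_eq {2}/GN mulmx_suml; apply: mle_sum => a.
apply: mle_mull; first exact: g_ge0.
by apply: GN_mono; apply: leq_trans (leq_subr _ _) (leq_pred _).
Qed.

Lemma CN_ge N : mle (GN N *m GN N) (CN (N + N)).
Proof.
rewrite CN_eq big_split_ord /= {1}/GN mulmx_suml.
apply: mle_trans (mle_addr _ _); last first.
  by apply: mle0_sum => a; apply: mle0_mul; [apply: g_ge0 | apply: GN_ge0].
apply: mle_sum => a; apply: mle_mull; first exact: g_ge0.
apply: GN_mono => /=.
have := ltn_ord a; move: (nat_of_ord a) => k Hk. lia.
Qed.

Lemma RGN_le N : mle (Rq (GN N)) (GN (N + N).+1).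
Proof.
rewrite GN_S /Rq; apply: mleD; last exact: mle_mull h1 (CN_ge N).
apply: mleD; first exact: mle_refl.
by apply: mle_mull h0 (GN_mono _); rewrite leq_addl.
Qed.

Lemma GN_le_super (Y : 'M[R]_m) : mle 0 Y -> mle (Rq Y) Y -> forall N, mle (GN N) Y.
Proof.
move=> Y0 HY; elim=> [|N IH]; first by rewrite GN0.
apply: mle_trans HY; rewrite GN_S /Rq; apply: mleD.
  by apply: mleD; [exact: mle_refl | exact: mle_mull h0 IH].
apply: mle_mull h1 (mle_trans (CN_le N) _).
exact: mle_trans (mle_mull (GN_ge0 N) IH) (mle_mulr Y0 IH).
Qed.

Lemma ones_ge0 : mle 0 ones.
Proof. by move=> i j; rewrite !mxE ler01. Qed.

Lemma GN_rows N : mle (GN N *m ones) ones.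
Proof.
elim: N => [|N IH]; first by rewrite GN0 mul0mx; exact: ones_ge0.
apply: mle_trans hsub; rewrite GN_S !mulmxDl.
apply: mleD; first (apply: mleD; first exact: mle_refl).
  by rewrite -mulmxA; apply: mle_mull h0 IH.
rewrite -mulmxA; apply: (mle_mull h1); apply: (mle_trans _ IH).
apply: mle_trans (mle_mulr ones_ge0 (CN_le N)) _.
rewrite -mulmxA; exact: (mle_mull (GN_ge0 N) IH).
Qed.

Lemma GN_le1 N i j : GN N i j <= 1.
Proof.
have := GN_rows N i 0; rewrite !mxE => H; apply: le_trans H.
rewrite (bigD1 j) //= !mxE mulr1 lerDl; apply: sumr_ge0 => k _.
by rewrite mxE mulr1; have := GN_ge0 N i k; rewrite mxE.
Qed.

Definition Gq := qbd_G Lm1 L0 L1.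

Lemma GN_cvg : mcvg GN Gq.
Proof.
move=> i j; rewrite /Gq /qbd_G mxE.
have -> : series (fun n => (F n 1 *m Lm1) i j) = (fun N => GN N i j).
  by apply: funext => N; rewrite /series /= /GN summxE big_mkord.
apply: nondecreasing_is_cvgn.
  by move=> a b Hab; apply: GN_mono.
by exists 1 => _ [N _ <-]; apply: GN_le1.
Qed.

Lemma mcvg_ge_ev a b (A_ : nat -> 'M[R]_(a,b)) A B N0 :
  mcvg A_ A -> (forall N, (N0 <= N)%N -> mle B (A_ N)) -> mle B A.
Proof.
move=> HA HB i j; apply: (cvgr_to_ge (HA i j)).
by exists N0 => // N /= HN; apply: HB.
Qed.

Lemma Gq_ge N : mle (GN N) Gq.
Proof. by apply: (mcvg_ge_ev (N0 := N) GN_cvg) => M HM; apply: GN_mono. Qed.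

Lemma Gq_ge0 : mle 0 Gq.
Proof. by have := Gq_ge 0; rewrite GN0. Qed.

Lemma Gq_min (Y : 'M[R]_m) : mle 0 Y -> mle (Rq Y) Y -> mle Gq Y.
Proof. by move=> Y0 HY; apply: (mcvg_le GN_cvg) => N; apply: GN_le_super. Qed.

Lemma Gq_rows : mle (Gq *m ones) ones.
Proof.
apply: (mcvg_le (A_ := fun N => GN N *m ones)); last exact: GN_rows.
exact: (mcvg_mul (A_ := GN) (B_ := fun _ => ones) GN_cvg (mcvg_cst ones)).
Qed.

Lemma Gq_fix : Rq Gq = Gq.
Proof.
apply: mle_anti.
  have HR : mcvg (fun N => Rq (GN N)) (Rq Gq).
    apply: (mcvg_add (A_ := fun N => Lm1 + L0 *m GN N)).
      apply: (mcvg_add (A_ := fun N => Lm1)); first exact: mcvg_cst.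
      exact: mcvg_mul (mcvg_cst _) GN_cvg.
    exact: mcvg_mul (mcvg_cst _) (mcvg_mul GN_cvg GN_cvg).
  apply: (mcvg_le HR) => N; apply: mle_trans (RGN_le N) (Gq_ge _).
apply: (mcvg_le GN_cvg) => N.
apply: mle_trans (GN_mono (leqnSn N)) _.
rewrite GN_S /Rq; apply: mleD.
  by apply: mleD; [exact: mle_refl | exact: mle_mull h0 (Gq_ge N)].
apply: mle_mull h1 (mle_trans (CN_le N) _).
exact: mle_trans (mle_mull (GN_ge0 N) (Gq_ge N)) (mle_mulr Gq_ge0 (Gq_ge N)).
Qed.

Fixpoint Xs N := match N with 0%N => Gq | N'.+1 => L1 *m Xs N' *m Gq end.

Lemma mle_sub0 a b (A B : 'M[R]_(a,b)) : mle 0 (B - A) -> mle A B.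
Proof. by move=> H i j; have := H i j; rewrite !mxE subr_ge0. Qed.

Lemma mle_0sub a b (A B : 'M[R]_(a,b)) : mle A B -> mle 0 (B - A).
Proof. by move=> H i j; rewrite !mxE subr_ge0. Qed.

Lemma Xs_le N : mle (Xs N) (Gq - GN N).
Proof.
elim: N => [|N IH]; first by rewrite GN0 subr0; exact: mle_refl.
have E0 : mle 0 (Gq - GN N) := mle_0sub (Gq_ge N).
have -> : Gq - GN N.+1 = L0 *m (Gq - GN N) + L1 *m (Gq *m Gq - CN N).
  rewrite -{1}Gq_fix GN_S /Rq.
  by rewrite sub3 !mulmxBr.
apply: mle_trans (mle_mulr Gq_ge0 (mle_mull h1 IH)) _.
rewrite -mulmxA; apply: (mle_trans (B := L1 *m (Gq *m Gq - CN N))); last first.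
  by rewrite [X in mle _ X]addrC; exact: (mle_addr _ (mle0_mul h0 E0)).
apply: (mle_mull h1); apply: mle_sub0.
have -> : Gq *m Gq - CN N - (Gq - GN N) *m Gq
   = GN N *m (Gq - GN N) + (GN N *m GN N - CN N).
  by rewrite mulmxBl mulmxBr (subX _ _ _ (GN N *m GN N)).
apply: mle0_add; first exact: mle0_mul (GN_ge0 N) E0.
exact: mle_0sub (CN_le N).
Qed.

Lemma tail_cvg : mcvg (fun N => Gq - GN N) 0.
Proof. by rewrite -(subrr Gq); apply: mcvg_sub (mcvg_cst _) GN_cvg. Qed.

End QBD.


Section Blocks.
Variable R : realType.

Lemma mle_block m1 m2 n1 n2 (A A' : 'M[R]_(m1,n1)) (B B' : 'M[R]_(m1,n2))
  (C C' : 'M[R]_(m2,n1)) (D D' : 'M[R]_(m2,n2)) :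
  mle A A' -> mle B B' -> mle C C' -> mle D D' ->
  mle (block_mx A B C D) (block_mx A' B' C' D').
Proof.
move=> HA HB HC HD i j.
case: (split_ordP i) => i' ->; case: (split_ordP j) => j' ->;
  by rewrite ?block_mxEul ?block_mxEur ?block_mxEdl ?block_mxEdr.
Qed.

Lemma mle0_block m1 m2 n1 n2 (A : 'M[R]_(m1,n1)) (B : 'M[R]_(m1,n2))
  (C : 'M[R]_(m2,n1)) (D : 'M[R]_(m2,n2)) :
  mle 0 A -> mle 0 B -> mle 0 C -> mle 0 D -> mle 0 (block_mx A B C D).
Proof. by move=> *; rewrite -block_mx0; apply: mle_block. Qed.

Lemma mle_col m1 m2 n (A A' : 'M[R]_(m1,n)) (B B' : 'M[R]_(m2,n)) :
  mle A A' -> mle B B' -> mle (col_mx A B) (col_mx A' B').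
Proof.
move=> HA HB i j; case: (split_ordP i) => i' ->;
  by rewrite ?col_mxEu ?col_mxEd.
Qed.

Lemma mle_ul m1 m2 n1 n2 (X Y : 'M[R]_(m1 + m2, n1 + n2)) :
  mle X Y -> mle (ulsubmx X) (ulsubmx Y).
Proof. by move=> H i j; rewrite !mxE. Qed.
Lemma mle_ur m1 m2 n1 n2 (X Y : 'M[R]_(m1 + m2, n1 + n2)) :
  mle X Y -> mle (ursubmx X) (ursubmx Y).
Proof. by move=> H i j; rewrite !mxE. Qed.
Lemma mle_dl m1 m2 n1 n2 (X Y : 'M[R]_(m1 + m2, n1 + n2)) :
  mle X Y -> mle (dlsubmx X) (dlsubmx Y).
Proof. by move=> H i j; rewrite !mxE. Qed.
Lemma mle_dr m1 m2 n1 n2 (X Y : 'M[R]_(m1 + m2, n1 + n2)) :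
  mle X Y -> mle (drsubmx X) (drsubmx Y).
Proof. by move=> H i j; rewrite !mxE. Qed.

Lemma mle_urb m1 m2 n1 n2 (A A' : 'M[R]_(m1,n1)) (B B' : 'M[R]_(m1,n2))
  (C C' : 'M[R]_(m2,n1)) (D D' : 'M[R]_(m2,n2)) :
  mle (block_mx A B C D) (block_mx A' B' C' D') -> mle B B'.
Proof. by move/mle_ur; rewrite !block_mxKur. Qed.
Lemma mle_drb m1 m2 n1 n2 (A A' : 'M[R]_(m1,n1)) (B B' : 'M[R]_(m1,n2))
  (C C' : 'M[R]_(m2,n1)) (D D' : 'M[R]_(m2,n2)) :
  mle (block_mx A B C D) (block_mx A' B' C' D') -> mle D D'.
Proof. by move/mle_dr; rewrite !block_mxKdr. Qed.

Lemma mle0_scale a b (s : R) (A : 'M[R]_(a,b)) : 0 <= s -> mle 0 A -> mle 0 (s *: A).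
Proof. by move=> hs HA i j; rewrite !mxE mulr_ge0 //; have := HA i j; rewrite mxE. Qed.

Lemma half_eq a b (A X : 'M[R]_(a,b)) : A = 2^-1 *: (A + X) -> A = X.
Proof. by move/matrixP => H; apply/matrixP => i j; have := H i j; rewrite !mxE; lra. Qed.

Lemma half_eqV a b (A X : 'M[R]_(a,b)) : A = X -> A = 2^-1 *: (A + X).
Proof. by move=> ->; apply/matrixP => i j; rewrite !mxE; lra. Qed.

Lemma Gq_left0 p q (Lm1 L0 L1 : 'M[R]_(p + q)) :
  (forall k j, Lm1 k (lshift q j) = 0) ->
  ulsubmx (Gq Lm1 L0 L1) = 0 /\ dlsubmx (Gq Lm1 L0 L1) = 0.
Proof.
move=> H.
suff E : forall i j,
  limn (series (fun n => (qbd_taboo Lm1 L0 L1 n 1 *m Lm1) i (lshift q j))) = 0.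
  by split; apply/matrixP => i j; rewrite !mxE E.
move=> i j.
have -> : series (fun n => (qbd_taboo Lm1 L0 L1 n 1 *m Lm1) i (lshift q j))
     = (fun _ => 0).
  apply: funext => N; rewrite /series /= big1 // => n _.
  by rewrite mxE big1 // => k _; rewrite H mulr0.
exact: lim_cst.
Qed.

Lemma Gq_shape p q (Lm1 L0 L1 : 'M[R]_(p + q)) :
  (forall k j, Lm1 k (lshift q j) = 0) ->
  Gq Lm1 L0 L1 = block_mx 0 (ursubmx (Gq Lm1 L0 L1)) 0 (drsubmx (Gq Lm1 L0 L1)).
Proof. by move=> H; have [E1 E2] := Gq_left0 L0 L1 H; rewrite -[in LHS](submxK (Gq Lm1 L0 L1)) E1 E2. Qed.

Lemma mle0_ul m1 m2 n1 n2 (X : 'M[R]_(m1 + m2, n1 + n2)) : mle 0 X -> mle 0 (ulsubmx X).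
Proof. by move=> H i j; have := H (lshift _ i) (lshift _ j); rewrite !mxE. Qed.
Lemma mle0_ur m1 m2 n1 n2 (X : 'M[R]_(m1 + m2, n1 + n2)) : mle 0 X -> mle 0 (ursubmx X).
Proof. by move=> H i j; have := H (lshift _ i) (rshift _ j); rewrite !mxE. Qed.
Lemma mle0_dl m1 m2 n1 n2 (X : 'M[R]_(m1 + m2, n1 + n2)) : mle 0 X -> mle 0 (dlsubmx X).
Proof. by move=> H i j; have := H (rshift _ i) (lshift _ j); rewrite !mxE. Qed.
Lemma mle0_dr m1 m2 n1 n2 (X : 'M[R]_(m1 + m2, n1 + n2)) : mle 0 X -> mle 0 (drsubmx X).
Proof. by move=> H i j; have := H (rshift _ i) (rshift _ j); rewrite !mxE. Qed.

End Blocks.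


Section Main.
Variables (R : realType) (p q : nat) (T : 'M[R]_(p + q)) (Psi : 'M[R]_(p, q)) (lam : R).
Hypotheses (hT : is_generator T) (hPsi : is_min_nonneg_riccati_sol T Psi)
  (hlam0 : 0 < lam) (hlam : forall i, `|T i i| <= lam).

Local Notation c := (lam^-1).
Local Notation P := (1%:M + lam^-1 *: T).
Local Notation Pul := (ulsubmx P).
Local Notation Pur := (ursubmx P).
Local Notation Pdl := (dlsubmx P).
Local Notation Pdr := (drsubmx P).
Local Notation Tul := (ulsubmx T).
Local Notation Tur := (ursubmx T).
Local Notation Tdl := (dlsubmx T).
Local Notation Tdr := (drsubmx T).
Local Notation op := (const_mx 1 : 'cV[R]_p).
Local Notation oq := (const_mx 1 : 'cV[R]_q).
Local Notation opq := (const_mx 1 : 'cV[R]_(p + q)).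

Lemma ci_neq0 : c != 0. Proof. by rewrite invr_eq0 gt_eqF. Qed.
Lemma ci_ge0 : 0 <= c. Proof. by rewrite invr_ge0 ltW. Qed.

Lemma P_blockE : P = block_mx (1%:M + c *: Tul) (c *: Tur) (c *: Tdl) (1%:M + c *: Tdr).
Proof.
by rewrite {1}(scalar_mx_block p q 1) -{1}(submxK T) scale_block_mx add_block_mx !add0r.
Qed.

Lemma Pul_E : Pul = 1%:M + c *: Tul. Proof. by rewrite P_blockE block_mxKul. Qed.
Lemma Pur_E : Pur = c *: Tur. Proof. by rewrite P_blockE block_mxKur. Qed.
Lemma Pdl_E : Pdl = c *: Tdl. Proof. by rewrite P_blockE block_mxKdl. Qed.
Lemma Pdr_E : Pdr = 1%:M + c *: Tdr. Proof. by rewrite P_blockE block_mxKdr. Qed.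

Lemma P_block : P = block_mx Pul Pur Pdl Pdr. Proof. by rewrite submxK. Qed.

Lemma P_ge0 : mle 0 P.
Proof.
move=> i j; rewrite !mxE; case: (eqVneq i j) => [<-|ne] /=.
  have := hlam i; rewrite ler_norml => /andP [H _].
  have : c * (- lam) <= c * T i i by apply: ler_wpM2l; [exact: ci_ge0|].
  by rewrite mulrN mulVf ?gt_eqF // => H2; lra.
by rewrite add0r mulr_ge0 ?ci_ge0 // hT.1.
Qed.

Lemma P_rows : P *m opq = opq.
Proof.
rewrite mulmxDl mul1mx -scalemxAl.
have -> : T *m opq = 0.
  apply/matrixP => i j; rewrite !mxE.
  under eq_bigr do rewrite mxE mulr1.
  exact: hT.2.
by rewrite scaler0 addr0.
Qed.

Lemma P_rows_b : Pul *m op + Pur *m oq = op /\ Pdl *m op + Pdr *m oq = oq.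
Proof.
have := P_rows; rewrite {1}P_block -col_mx_const mul_block_col.
by move/eq_col_mx.
Qed.

Lemma Pul_ge0 : mle 0 Pul. Proof. exact: mle0_ul P_ge0. Qed.
Lemma Pur_ge0 : mle 0 Pur. Proof. exact: mle0_ur P_ge0. Qed.
Lemma Pdl_ge0 : mle 0 Pdl. Proof. exact: mle0_dl P_ge0. Qed.
Lemma Pdr_ge0 : mle 0 Pdr. Proof. exact: mle0_dr P_ge0. Qed.

Definition W (a : 'M[R]_(p, q)) : 'M[R]_q := 1%:M - c *: (Tdr + Tdl *m a).

Lemma Wb_of a b : b = 2^-1 *: (1%:M + Pdr *m b + Pdl *m (a *m b)) -> W a *m b = 1%:M.
Proof.
rewrite Pdr_E Pdl_E mulmxDl mul1mx -!scalemxAl => H.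
rewrite /W mulmxBl mul1mx -scalemxAl mulmxDl -mulmxA.
apply/matrixP => i j; move/matrixP: H => /(_ i j); rewrite !mxE => H; lra.
Qed.

Lemma b_of_Wb a b : W a *m b = 1%:M -> b = 2^-1 *: (1%:M + Pdr *m b + Pdl *m (a *m b)).
Proof.
rewrite Pdr_E Pdl_E mulmxDl mul1mx -!scalemxAl.
rewrite /W mulmxBl mul1mx -scalemxAl mulmxDl -mulmxA => H.
apply/matrixP => i j; move/matrixP: H => /(_ i j); rewrite !mxE => H; lra.
Qed.

Lemma aW_of a b : a = Pur *m b + Pul *m (a *m b) -> b *m W a = 1%:M ->
  a *m W a = Pur + Pul *m a.
Proof.
move=> H Hb.
have E : a = (Pur + Pul *m a) *m b by rewrite mulmxDl -mulmxA.
by rewrite {1}E -mulmxA Hb mulmx1.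
Qed.

Lemma ricc_of_aW a : a *m W a = Pur + Pul *m a -> riccati T a.
Proof.
rewrite Pur_E Pul_E /W mulmxBr mulmx1 -scalemxAr mulmxDr mulmxDl mul1mx -scalemxAl.
move=> H; rewrite /riccati -mulmxA; apply/matrixP => i j.
move/matrixP: H => /(_ i j); rewrite !mxE => H.
apply: (mulfI ci_neq0); rewrite mulr0; lra.
Qed.

Lemma aW_of_ricc a : riccati T a -> a *m W a = Pur + Pul *m a.
Proof.
rewrite Pur_E Pul_E /W mulmxBr mulmx1 -scalemxAr mulmxDr mulmxDl mul1mx -scalemxAl.
rewrite /riccati -mulmxA => H; apply/matrixP => i j.
move/matrixP: H => /(_ i j); rewrite !mxE => H.
have := f_equal (fun x => c * x) H; rewrite mulr0 => H2.
lra.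
Qed.

Lemma a_of_aW a b : a *m W a = Pur + Pul *m a -> W a *m b = 1%:M ->
  a = Pur *m b + Pul *m (a *m b).
Proof.
move=> H Hb.
by rewrite -{1}(mulmx1 a) -Hb mulmxA H mulmxDl -mulmxA.
Qed.

Local Notation Bm1 := (2^-1 *: block_mx 0 0 0 1%:M : 'M[R]_(p + q)).
Local Notation B0 := (2^-1 *: block_mx 1%:M Pur 0 Pdr : 'M[R]_(p + q)).
Local Notation B1 := (2^-1 *: block_mx Pul 0 Pdl 0 : 'M[R]_(p + q)).
Local Notation D0 := (block_mx 0 Pur 0 (2^-1 *: Pdr) : 'M[R]_(p + q)).
Local Notation D1 := (block_mx Pul 0 (2^-1 *: Pdl) 0 : 'M[R]_(p + q)).
Local Notation A0 := (block_mx 0 Pur 0 0 : 'M[R]_(p + q)).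
Local Notation A1 := (block_mx Pul 0 0 0 : 'M[R]_(p + q)).

Ltac simp_blk := rewrite /Rq ?mulmx_block -?scalemxAl ?mulmx_block
  ?(mul0mx, mulmx0, add0r, addr0, mul1mx, mulmx1, scaler0)
  ?scale_block_mx ?add_block_mx ?(mul0mx, mulmx0, add0r, addr0, scaler0).

Lemma R_ii a b : Rq Bm1 B0 B1 (block_mx 0 a 0 b) =
  block_mx 0 (2^-1 *: (a + (Pur *m b + Pul *m (a *m b)))) 0
             (2^-1 *: (1%:M + Pdr *m b + Pdl *m (a *m b))).
Proof. by simp_blk; congr block_mx; apply/matrixP => i j; rewrite !mxE; lra. Qed.

Lemma R_i a b : Rq Bm1 D0 D1 (block_mx 0 a 0 b) =
  block_mx 0 (Pur *m b + Pul *m (a *m b)) 0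
             (2^-1 *: (1%:M + Pdr *m b + Pdl *m (a *m b))).
Proof. by simp_blk; congr block_mx; apply/matrixP => i j; rewrite !mxE; lra. Qed.

Lemma R_iii Z a b : Rq (block_mx 0 0 0 Z) A0 A1 (block_mx 0 a 0 b) =
  block_mx 0 (Pur *m b + Pul *m (a *m b)) 0 Z.
Proof. by simp_blk; congr block_mx; apply/matrixP => i j; rewrite !mxE; lra. Qed.

Lemma half_ge0 : 0 <= 2^-1 :> R. Proof. by rewrite invr_ge0 ler0n. Qed.

Lemma Bm1_ge0 : mle 0 Bm1.
Proof. by apply: (mle0_scale half_ge0); apply: mle0_block; [exact: mle00|exact: mle00|exact: mle00|exact: mle0_1]. Qed.
Lemma B0_ge0 : mle 0 B0.
Proof.
apply: (mle0_scale half_ge0); apply: mle0_block;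
  by [exact: mle0_1 | exact: Pur_ge0 | exact: mle00 | exact: Pdr_ge0].
Qed.
Lemma B1_ge0 : mle 0 B1.
Proof.
apply: (mle0_scale half_ge0); apply: mle0_block;
  by [exact: Pul_ge0 | exact: mle00 | exact: Pdl_ge0].
Qed.
Lemma D0_ge0 : mle 0 D0.
Proof.
apply: mle0_block; try exact: mle00; first exact: Pur_ge0.
exact: mle0_scale half_ge0 Pdr_ge0.
Qed.
Lemma D1_ge0 : mle 0 D1.
Proof.
apply: mle0_block; try exact: mle00; first exact: Pul_ge0.
exact: mle0_scale half_ge0 Pdl_ge0.
Qed.
Lemma A0_ge0 : mle 0 A0.
Proof. by apply: mle0_block; try exact: mle00; exact: Pur_ge0. Qed.
Lemma A1_ge0 : mle 0 A1.
Proof. by apply: mle0_block; try exact: mle00; exact: Pul_ge0. Qed.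
Lemma Am1_ge0 Z : mle 0 Z -> mle 0 (block_mx 0 0 0 Z : 'M[R]_(p + q)).
Proof. by move=> HZ; apply: mle0_block; try exact: mle00. Qed.

Lemma B_sub : mle ((Bm1 + B0 + B1) *m opq) opq.
Proof.
have [H1 H2] := P_rows_b.
rewrite -!scalerDr !add_block_mx -scalemxAl -col_mx_const mul_block_col scale_col_mx.
rewrite ?scaler0 ?add0r ?addr0 ?mulmxDl ?mul1mx ?mul0mx ?add0r -?scalemxAl ?mul1mx.
apply: mle_col => i j.
  by move/matrixP: H1 => /(_ i j); rewrite !mxE => H1; lra.
by move/matrixP: H2 => /(_ i j); rewrite !mxE => H2; lra.
Qed.

Lemma D_sub : mle ((Bm1 + D0 + D1) *m opq) opq.
Proof.
have [H1 H2] := P_rows_b.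
rewrite scale_block_mx !add_block_mx -col_mx_const mul_block_col.
rewrite ?scaler0 ?add0r ?addr0 ?mulmxDl ?mul1mx ?mul0mx ?add0r -?scalemxAl ?mul1mx.
apply: mle_col => i j.
  by move/matrixP: H1 => /(_ i j); rewrite !mxE => H1; lra.
by move/matrixP: H2 => /(_ i j); rewrite !mxE => H2; lra.
Qed.

Lemma A_sub Z : mle (Z *m oq) oq ->
  mle ((block_mx 0 0 0 Z + A0 + A1) *m opq) opq.
Proof.
move=> HZ; have [H1 H2] := P_rows_b.
rewrite !add_block_mx -col_mx_const mul_block_col.
rewrite ?scaler0 ?add0r ?addr0 ?mulmxDl ?mul1mx ?mul0mx ?add0r -?scalemxAl ?mul1mx.
apply: mle_col => i j.
  by move/matrixP: H1 => /(_ i j); rewrite !mxE => H1; lra.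
by have := HZ i j; rewrite !mxE; lra.
Qed.

Lemma Psi_ge0 : mle 0 Psi.
Proof. by case: hPsi => H _ _ i j; rewrite mxE. Qed.

Lemma left0 (X : 'M[R]_q) k j : (block_mx 0 0 0 X : 'M[R]_(p + q)) k (lshift q j) = 0.
Proof.
by case: (split_ordP k) => k' ->; rewrite ?block_mxEul ?block_mxEdl mxE.
Qed.

Lemma left0s (X : 'M[R]_q) k j : (2^-1 *: block_mx 0 0 0 X : 'M[R]_(p + q)) k (lshift q j) = 0.
Proof. by rewrite mxE left0 mulr0. Qed.

Lemma mle0_blk_r m1 m2 n1 n2 (A : 'M[R]_(m1,n1)) (B : 'M[R]_(m1,n2))
  (C : 'M[R]_(m2,n1)) (D : 'M[R]_(m2,n2)) :
  mle 0 (block_mx A B C D) -> mle 0 B /\ mle 0 D.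
Proof.
move=> H; split; [have := mle0_ur H | have := mle0_dr H];
  by rewrite ?block_mxKur ?block_mxKdr.
Qed.

Lemma mle_colu m1 m2 n (A A' : 'M[R]_(m1,n)) (B B' : 'M[R]_(m2,n)) :
  mle (col_mx A B) (col_mx A' B') -> mle A A'.
Proof. by move=> H i j; have := H (lshift _ i) j; rewrite !col_mxEu. Qed.

Lemma inv_uniq n (M X : 'M[R]_n) : M \in unitmx -> M *m X = 1%:M -> X = invmx M.
Proof. by move=> U HX; rewrite -[X]mul1mx -(mulVmx U) -mulmxA HX mulmx1. Qed.

Lemma small_qbd : mle (Psi *m oq) op ->
  exists Z : 'M[R]_q, [/\ mle 0 Z, mle (Z *m oq) oq & W Psi *m Z = 1%:M].
Proof.
move=> Hrow.
pose Z := Gq (2^-1 *: 1%:M : 'M[R]_q) (2^-1 *: (Pdr + Pdl *m Psi)) 0; exists Z.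
have hm1 : mle 0 (2^-1 *: 1%:M : 'M[R]_q) by apply: (mle0_scale half_ge0); exact: mle0_1.
have h0 : mle 0 (2^-1 *: (Pdr + Pdl *m Psi)).
  apply: (mle0_scale half_ge0); apply: mle0_add; first exact: Pdr_ge0.
  exact: mle0_mul Pdl_ge0 Psi_ge0.
have h1 : mle 0 (0 : 'M[R]_q) by exact: mle00.
have hsub : mle ((2^-1 *: 1%:M + 2^-1 *: (Pdr + Pdl *m Psi) + 0) *m oq) oq.
  have [_ H2] := P_rows_b.
  have H3 := mle_mull Pdl_ge0 Hrow.
  rewrite addr0 -scalerDr -scalemxAl !mulmxDl mul1mx -mulmxA => i j.
  move/matrixP: H2 => /(_ i j); have := H3 i j; rewrite !mxE => H3' H2; lra.
split; first exact: Gq_ge0 hm1 h0 h1 hsub.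
  exact: Gq_rows hm1 h0 h1 hsub.
apply: Wb_of.
have := Gq_fix hm1 h0 h1 hsub; rewrite -/Z /Rq mul0mx addr0 => HZ.
rewrite -{1}HZ -scalemxAl mulmxDl -mulmxA; apply/matrixP => i j; rewrite !mxE; lra.
Qed.

Fixpoint psiN (Z : 'M[R]_q) N : 'M[R]_(p, q) :=
  match N with 0%N => Psi | N'.+1 => Pul *m psiN Z N' *m Z end.

Lemma pin (Z : 'M[R]_q) a b : W Psi *m Z = 1%:M -> mle 0 a ->
  a = Pur *m b + Pul *m (a *m b) ->
  b = 2^-1 *: (1%:M + Pdr *m b + Pdl *m (a *m b)) ->
  mle a Psi -> a = Psi /\ b = Z.
Proof.
move=> HZ a0 Ea Eb aPsi.
have Wb := Wb_of Eb.
have bW := mulmx1C Wb.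
have ric := ricc_of_aW (aW_of Ea bW).
have Psia : mle Psi a.
  case: hPsi => _ _ /(_ a) H i j; apply: H => //.
  by move=> i' j'; have := a0 i' j'; rewrite mxE.
have aE : a = Psi by apply: mle_anti.
split => //; subst a.
have [U _] := mulmx1_unit HZ.
by rewrite (inv_uniq U Wb) (inv_uniq U HZ).
Qed.

Lemma main :
  Gq Bm1 B0 B1 = Gq Bm1 D0 D1 /\  Gq Bm1 B0 B1 = Gq (block_mx 0 0 0 (invmx (1%:M - c *: (Tdr + Tdl *m Psi)))) A0 A1.
Proof.
have hB := (Bm1_ge0, B0_ge0, B1_ge0, B_sub).
have [a2 [b2 Hs2]] : exists a b, Gq Bm1 B0 B1 = block_mx 0 a 0 b.
  by exists (ursubmx (Gq Bm1 B0 B1)), (drsubmx (Gq Bm1 B0 B1)); apply: Gq_shape => k j; apply: left0s.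
have F2 := Gq_fix Bm1_ge0 B0_ge0 B1_ge0 B_sub.
rewrite Hs2 R_ii in F2.
have [_ Ea2 _ Eb2] := eq_block_mx F2.
have {}Ea2 := half_eq (esym Ea2).
have {}Eb2 := esym Eb2.
have G2ge0 := Gq_ge0 Bm1_ge0 B0_ge0 B1_ge0 B_sub; rewrite Hs2 in G2ge0.
have [a20 b20] := mle0_blk_r G2ge0.
have ric2 := ricc_of_aW (aW_of Ea2 (mulmx1C (Wb_of Eb2))).
have Psia2 : mle Psi a2.
  case: hPsi => _ _ /(_ a2) H i j; apply: H => //.
  by move=> i' j'; have := a20 i' j'; rewrite mxE.
have rows2 := Gq_rows Bm1_ge0 B0_ge0 B1_ge0 B_sub.
rewrite Hs2 -col_mx_const mul_block_col !mul0mx !add0r in rows2.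
have rowPsi : mle (Psi *m oq) op.
  exact: mle_trans (mle_mulr (@ones_ge0 R q) Psia2) (mle_colu rows2).
have [Z [Z0 Zr WZ]] := small_qbd rowPsi.
have [U _] := mulmx1_unit WZ.
have invZ : invmx (W Psi) = Z by rewrite (inv_uniq U WZ).
have [_ ricP _] := hPsi.
have EaP := a_of_aW (aW_of_ricc ricP) WZ.
have EbP := b_of_Wb WZ.
pose Y : 'M[R]_(p + q) := block_mx 0 Psi 0 Z.
have Y0 : mle 0 Y by apply: mle0_block; [exact: mle00 | exact: Psi_ge0 | exact: mle00 | exact: Z0].
have RY2 : Rq Bm1 B0 B1 Y = Y by rewrite /Y R_ii -(half_eqV EaP) -EbP.
have HY2 : mle (Rq Bm1 B0 B1 Y) Y by rewrite RY2; exact: mle_refl.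
have le2 := Gq_min Bm1_ge0 B0_ge0 B1_ge0 B_sub Y0 HY2.
rewrite Hs2 in le2.
have [Ea2' Eb2'] := pin WZ a20 Ea2 Eb2 (mle_urb le2).
rewrite Ea2' Eb2' -/Y in Hs2.
have [a1 [b1 Hs1]] : exists a b, Gq Bm1 D0 D1 = block_mx 0 a 0 b.
  by exists (ursubmx (Gq Bm1 D0 D1)), (drsubmx (Gq Bm1 D0 D1)); apply: Gq_shape => k j; apply: left0s.
have F1 := Gq_fix Bm1_ge0 D0_ge0 D1_ge0 D_sub.
rewrite Hs1 R_i in F1.
have [_ Ea1 _ Eb1] := eq_block_mx F1.
have G1ge0 := Gq_ge0 Bm1_ge0 D0_ge0 D1_ge0 D_sub; rewrite Hs1 in G1ge0.
have [a10 _] := mle0_blk_r G1ge0.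
have RY1 : Rq Bm1 D0 D1 Y = Y by rewrite /Y R_i -EaP -EbP.
have HY1 : mle (Rq Bm1 D0 D1 Y) Y by rewrite RY1; exact: mle_refl.
have le1 := Gq_min Bm1_ge0 D0_ge0 D1_ge0 D_sub Y0 HY1.
rewrite Hs1 in le1.
have [Ea1' Eb1'] := pin WZ a10 (esym Ea1) (esym Eb1) (mle_urb le1).
rewrite Ea1' Eb1' -/Y in Hs1.
split; first by rewrite Hs2 Hs1.
rewrite -/(W Psi) invZ.
have hA1 := Am1_ge0 Z0.
have hAs := A_sub Zr.
have [a3 [b3 Hs3]] : exists a b, Gq (block_mx 0 0 0 Z) A0 A1 = block_mx 0 a 0 b.
  by exists (ursubmx (Gq (block_mx 0 0 0 Z) A0 A1)), (drsubmx (Gq (block_mx 0 0 0 Z) A0 A1)); apply: Gq_shape => k j; apply: left0.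
have F3 := Gq_fix hA1 A0_ge0 A1_ge0 hAs.
rewrite Hs3 R_iii in F3.
have [_ Ea3 _ Eb3] := eq_block_mx F3.
subst b3.
have RY3 : Rq (block_mx 0 0 0 Z) A0 A1 Y = Y by rewrite /Y R_iii -EaP.
have HY3 : mle (Rq (block_mx 0 0 0 Z) A0 A1 Y) Y by rewrite RY3; exact: mle_refl.
have le3 := Gq_min hA1 A0_ge0 A1_ge0 hAs Y0 HY3.
rewrite Hs3 in le3.
have a3P := mle_urb le3.
pose d := Psi - a3.
have Ed : d = Pul *m d *m Z.
  have E : Psi - a3 = (Pur *m Z + Pul *m (Psi *m Z)) - (Pur *m Z + Pul *m (a3 *m Z)).
    by rewrite -EaP Ea3.
  by rewrite /d {1}E opprD addrACA subrr add0r -mulmxBr -mulmxBl mulmxA.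
have dle : forall N, mle d (psiN Z N).
  have G3ge0 := Gq_ge0 hA1 A0_ge0 A1_ge0 hAs; rewrite Hs3 in G3ge0.
  have [a30 _] := mle0_blk_r G3ge0.
  elim=> [|N IH].
    by move=> i j; rewrite /d /= !mxE; have := a30 i j; rewrite mxE; lra.
  by rewrite Ed /=; apply: mle_mulr Z0 (mle_mull Pul_ge0 IH).
have Xshape : forall N, exists v, Xs Bm1 D0 D1 N = block_mx 0 (psiN Z N) 0 v.
  elim=> [|N [v IH]]; first by exists Z; rewrite /= Hs1.
  rewrite /= IH -/(Gq Bm1 D0 D1) Hs1 /Y.
  simp_blk.
  by eexists.
have Xle := Xs_le Bm1_ge0 D0_ge0 D1_ge0 D_sub.
have tl := tail_cvg Bm1_ge0 D0_ge0 D1_ge0 D_sub.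
have d0 : mle d 0.
  move=> i j.
  have := cvgr_to_ge (tl (lshift q i) (rshift p j)) (b := d i j).
  rewrite !mxE => H; apply: H.
  apply: nearW => N.
  have [v Hv] := Xshape N.
  have H2 := Xle N (lshift q i) (rshift p j); rewrite Hv block_mxEur in H2.
  have H1 := dle N i j.
  have E : d i j = Psi i j - a3 i j by rewrite /d !mxE.
  by rewrite -E; apply: le_trans H1 H2.
have a3E : a3 = Psi.
  apply: mle_anti => // i j; have := d0 i j; rewrite /d !mxE; lra.
by rewrite Hs2 Hs3 a3E.
Qed.

End Main.


Theorem theorem3 (R : realType) (p q : nat) (hp : (0 < p)%N) (hq : (0 < q)%N)
  (T : 'M[R]_(p + q)) (hT : is_generator T)
  (Psi : 'M[R]_(p, q)) (hPsi : is_min_nonneg_riccati_sol T Psi)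
  (lam : R) (hlam0 : 0 < lam) (hlam : forall i, `|T i i| <= lam) :
  let U := drsubmx T + dlsubmx T *m Psi in
  let P := 1%:M + lam^-1 *: T in
  let Delta_m1 : 'M[R]_(p + q) := 2^-1 *: block_mx 0 0 0 1%:M in
  let Delta_0 : 'M[R]_(p + q) :=
    block_mx 0 (ursubmx P) 0 (2^-1 *: drsubmx P) in
  let Delta_1 : 'M[R]_(p + q) :=
    block_mx (ulsubmx P) 0 (2^-1 *: dlsubmx P) 0 in
  let A'_m1 : 'M[R]_(p + q) := 2^-1 *: block_mx 0 0 0 1%:M in
  let A'_0 : 'M[R]_(p + q) := 2^-1 *: block_mx 1%:M (ursubmx P) 0 (drsubmx P) in
  let A'_1 : 'M[R]_(p + q) := 2^-1 *: block_mx (ulsubmx P) 0 (dlsubmx P) 0 in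
  let A_m1 : 'M[R]_(p + q) :=
    block_mx 0 0 0 (invmx (1%:M - lam^-1 *: U)) in
  let A_0 : 'M[R]_(p + q) := block_mx 0 (ursubmx P) 0 0 in
  let A_1 : 'M[R]_(p + q) := block_mx (ulsubmx P) 0 0 0 in
  qbd_G A'_m1 A'_0 A'_1 = qbd_G Delta_m1 Delta_0 Delta_1 /\
  qbd_G A'_m1 A'_0 A'_1 = qbd_G A_m1 A_0 A_1.
Proof.
move=> U P Dm1 D0 D1 Bm1 B0 B1 Am1 A0 A1.
exact: (main hT hPsi hlam0 hlam).
Qed.
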